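(* Let $C$ be a projective linear code of length $n$ over $\mathbb{Z}_4$ of type $4^{k_1}2^{k_2}$ with exactly two nonzero Lee weights, and let $G\in\mathbb{Z}_4^{(k_1+k_2)\times n}$ be a generator matrix of $C$. If $C$ is Plotkin-optimal, then $w_L(\mathbf{x}G)=n$ for all $\mathbf{x}\in\mathbb{Z}_4^{k_1+k_2}\setminus(2\mathbb{Z}_4)^{k_1+k_2}$.
   Context: A linear code of length $n$ over $\mathbb{Z}_4$ is a $\mathbb{Z}_4$-submodule of $\mathbb{Z}_4^n$, of type $4^{k_1}2^{k_2}$ if isomorphic to $\mathbb{Z}_4^{k_1}\times\mathbb{Z}_2^{k_2}$. A generator matrix is a matrix whose rows generate the code and no proper subset of whose rows does. Lee weight: $w_L(0)=0,w_L(1)=1,w_L(2)=2,w_L(3)=1$, additive on vectors. Plotkin-optimal: minimum nonzero Lee weight equals $\lfloor\frac{|C|}{|C|-1}n\rfloor$. Projective: the dual with respect to $\sum x_iy_i\in\mathbb{Z}_4$ has minimum Lee distance at least $3$. $2\mathbb{Z}_4=\{0,2\}$. *)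

(* Defs.v *)
From HB Require Import structures.
From mathcomp Require Import all_boot all_order all_algebra.
Set Implicit Arguments. Unset Strict Implicit. Unset Printing Implicit Defensive.
Import GRing.Theory.
Local Open Scope ring_scope.

Definition leeZ4 (a : 'Z_4) : nat := minn (val a) (4 - val a).

Definition lee_wt n (v : 'rV['Z_4]_n) : nat := (\sum_(i < n) leeZ4 (v ord0 i))%N.

Definition Z4_linear_code n (C : {set 'rV['Z_4]_n}) : Prop :=
  0 \in C /\ (forall u v, u \in C -> v \in C -> u + v \in C)
  /\ (forall (a : 'Z_4) v, v \in C -> a *: v \in C).

(* C is of type 4^k1 2^k2: isomorphic (as Z4-module / abelian group)
   to Z4^k1 x Z2^k2 *)
Definition Z4_code_type n (C : {set 'rV['Z_4]_n}) (k1 k2 : nat) : Prop :=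
  exists f : 'rV['Z_4]_k1 * 'rV['Z_2]_k2 -> 'rV['Z_4]_n,
    [/\ (forall x y, f (x.1 + y.1, x.2 + y.2) = f x + f y),
        injective f &
        (forall v, v \in C <-> exists x, f x = v)].

Definition two_lee_weights n (C : {set 'rV['Z_4]_n}) : Prop :=
  exists w1 w2 : nat, [/\ w1 <> w2,
    (forall c, c \in C -> c != 0 -> lee_wt c = w1 \/ lee_wt c = w2),
    (exists2 c, c \in C /\ c != 0 & lee_wt c = w1) &
    (exists2 c, c \in C /\ c != 0 & lee_wt c = w2)].

Definition Z4_dual n (C : {set 'rV['Z_4]_n}) : {set 'rV['Z_4]_n} :=
  [set y : 'rV['Z_4]_n | [forall c in C, (\sum_(i < n) c ord0 i * y ord0 i) == 0]].

Definition projective n (C : {set 'rV['Z_4]_n}) : Prop :=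
  forall y z, y \in Z4_dual C -> z \in Z4_dual C -> y != z ->
    (3 <= lee_wt (y - z))%N.

Definition min_nonzero_lee n (C : {set 'rV['Z_4]_n}) (d : nat) : Prop :=
  (exists2 c, c \in C /\ c != 0 & lee_wt c = d) /\
  (forall c, c \in C -> c != 0 -> (d <= lee_wt c)%N).

Definition plotkin_optimal n (C : {set 'rV['Z_4]_n}) : Prop :=
  min_nonzero_lee C ((#|C| * n) %/ (#|C| - 1))%N.

Definition rows_span m n (G : 'M['Z_4]_(m, n)) (S : {set 'I_m})
  : {set 'rV['Z_4]_n} :=
  [set x *m G | x in [set x : 'rV['Z_4]_m | [forall i, (i \notin S) ==> (x ord0 i == 0)]]].

Definition generator_matrix m n (G : 'M['Z_4]_(m, n)) (C : {set 'rV['Z_4]_n})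
  : Prop :=
  rows_span G setT = C /\
  (forall S : {set 'I_m}, S \proper setT -> rows_span G S != C).

Definition in2Z4 (a : 'Z_4) : bool := (a == 0) || (a == 2%:R).

(* Main.v *)
Require Import Defs.
From HB Require Import structures.
From mathcomp Require Import all_boot all_order all_algebra.
Import GRing.Theory.
Local Open Scope ring_scope.

Lemma Z4P (a : 'Z_4) : [\/ a = 0, a = 1, a = 2%:R | a = 3%:R].
Proof.
case: a => m Hm.
case: m Hm => [|[|[|[|m]]]] Hm.
- by constructor 1; apply/val_inj.
- by constructor 2; apply/val_inj.
- by constructor 3; apply/val_inj.
- by constructor 4; apply/val_inj.
- by [].
Qed.
Lemma lee_add2 (a : 'Z_4) : (leeZ4 a + leeZ4 (a + 2%:R)%R = 2)%N.
Proof. by case: (Z4P a) => ->. Qed.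

Ltac z4 a := case: (Z4P a) => ->; try (by []); try (by move=> _; apply/val_inj); try (by apply/val_inj).
Lemma unit_sq (a : 'Z_4) : ~~ in2Z4 a -> a * a = 1.
Proof. z4 a. Qed.
Lemma unit_mul2 (a : 'Z_4) : ~~ in2Z4 a -> 2%:R * a = 2%:R.
Proof. z4 a. Qed.
Lemma in2_mul2 (a : 'Z_4) : in2Z4 a -> a * 2%:R = 0.
Proof. z4 a. Qed.
Lemma in2Z4_add2 (a : 'Z_4) : in2Z4 (a + 2%:R) = in2Z4 a.
Proof. z4 a. Qed.

Theorem corollary4p5 (n k1 k2 : nat) (C : {set 'rV['Z_4]_n})
  (G : 'M['Z_4]_(k1 + k2, n)) :
  Z4_linear_code C -> Z4_code_type C k1 k2 -> projective C ->
  two_lee_weights C -> generator_matrix G C ->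
  plotkin_optimal C ->
  forall x : 'rV['Z_4]_(k1 + k2), (exists i, ~~ in2Z4 (x ord0 i)) ->
    lee_wt (x *m G) = n.
Proof.
move=> _ _ Hproj _ [Hspan Hmin] [[c0 [c0C c0n0] _] Hd] x [i0 Hi0].
have inC : forall y : 'rV['Z_4]_(k1+k2), y *m G \in C.
  move=> y; rewrite -Hspan; apply/imsetP; exists y => //.
  by rewrite inE; apply/forallP => i; rewrite in_setT.
have nz : forall (y : 'rV['Z_4]_(k1+k2)) i, ~~ in2Z4 (y ord0 i) -> y *m G != 0.
  move=> y i Hi; apply/negP => /eqP Hy0.
  have Hp : (setT :\ i) \proper [set: 'I_(k1+k2)].
    by rewrite properD1 // in_setT.
  move/negP: (Hmin _ Hp); apply; apply/eqP/setP => c.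
  apply/idP/idP.
    by case/imsetP => z _ ->.
  rewrite -{1}Hspan => /imsetP [z _ ->].
  apply/imsetP; exists (z - (z ord0 i * y ord0 i) *: y).
    rewrite inE; apply/forallP => l; apply/implyP.
    rewrite !inE andbT negbK => /eqP ->.
    by rewrite !mxE -mulrA unit_sq ?mulr1 ?subrr.
  by rewrite mulmxBl -scalemxAl Hy0 scaler0 subr0.
have ge : forall y : 'rV['Z_4]_(k1+k2), (exists i, ~~ in2Z4 (y ord0 i)) ->
    (n <= lee_wt (y *m G))%N.
  move=> y [i Hi]; apply: leq_trans (Hd _ (inC y) (nz y i Hi)).
  have C2 : (1 < #|C|)%N.
    apply/card_gt1P; exists 0, c0; split => //.
    by have := inC 0; rewrite mul0mx.
    by rewrite eq_sym.
  rewrite leq_divRL ?subn_gt0 //.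
  by rewrite [X in (_ <= X)%N]mulnC leq_mul2l leq_subr orbT.

have col_unit : forall j, exists i, ~~ in2Z4 (G i j).
  move=> j; case: (boolP [exists i, ~~ in2Z4 (G i j)]) => [/existsP // | Hno].
  exfalso.
  have Hall : forall i, in2Z4 (G i j).
    by move=> i; apply/negPn; move: Hno; rewrite negb_exists => /forallP.
  pose y : 'rV['Z_4]_n := \row_(l < n) (if l == j then 2%:R else 0).
  have yD : y \in Z4_dual C.
    rewrite inE; apply/forallP => c; apply/implyP.
    rewrite -Hspan => /imsetP [z _ ->].
    rewrite (bigD1 j) //= big1 => [|l /negbTE lj]; last by rewrite /y !mxE lj mulr0.
    rewrite !mxE eqxx addr0 mulr_suml; apply/eqP; apply: big1 => i _.
    by rewrite -mulrA in2_mul2 ?mulr0.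
  have zD : 0 \in Z4_dual C.
    rewrite inE; apply/forallP => c; apply/implyP => _; apply/eqP.
    by apply: big1 => l _; rewrite mxE mulr0.
  have yn0 : y != 0.
    by apply/eqP => /matrixP/(_ ord0 j); rewrite !mxE eqxx.
  have := Hproj _ _ yD zD yn0.
  rewrite subr0 /lee_wt (bigD1 j) //= big1 => [|l /negbTE lj]; last by rewrite mxE lj.
  by rewrite mxE eqxx.
pose X := [set y : 'rV['Z_4]_(k1+k2) | [exists i, ~~ in2Z4 (y ord0 i)]].
have colsum : forall j, (\sum_(y in X) leeZ4 ((y *m G) ord0 j))%N = #|X|.
  move=> j; have [i1 Hi1] := col_unit j.
  pose e : 'rV['Z_4]_(k1+k2) := \row_(i < k1+k2) (if i == i1 then 2%:R else 0).
  have eG : (e *m G) ord0 j = 2%:R.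
    rewrite mxE (bigD1 i1) //= big1 => [|l /negbTE lj]; last by rewrite /e !mxE lj mul0r.
    by rewrite mxE eqxx addr0 unit_mul2.
  have Xe : forall y, (y + e \in X) = (y \in X).
    move=> y; rewrite !inE; apply: eq_existsb => i.
    rewrite !mxE; case: (i == i1); last by rewrite addr0.
    by rewrite in2Z4_add2.
  have Hre : (\sum_(y in X) leeZ4 ((y *m G) ord0 j))%N =
             (\sum_(y in X) leeZ4 ((y *m G) ord0 j + 2%:R)%R)%N.
    rewrite (reindex_inj (addIr e)) /=; apply: eq_big => y; first by rewrite Xe.
    by rewrite mulmxDl mxE eG.
  have : ((\sum_(y in X) leeZ4 ((y *m G) ord0 j)) * 2 = #|X| * 2)%N.
    rewrite muln2 -addnn {2}Hre -big_split /=.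
    by rewrite (eq_bigr (fun _ => 2%N)) ?sum_nat_const // => y _; rewrite lee_add2.
  by move/eqP; rewrite eqn_mul2r /= => /eqP.
have sumX : (\sum_(y in X) lee_wt (y *m G))%N = (#|X| * n)%N.
  rewrite /lee_wt exchange_big /= (eq_bigr (fun _ => #|X|)) => [|j _]; last exact: colsum.
  by rewrite sum_nat_const card_ord mulnC.
have xX : x \in X by rewrite inE; apply/existsP; exists i0.
have geX : forall y, y \in X -> (n <= lee_wt (y *m G))%N.
  by move=> y; rewrite inE => /existsP [i Hi]; apply: ge; exists i.
have H1 : (\sum_(y in X) lee_wt (y *m G) =
           \sum_(y in X) (lee_wt (y *m G) - n) + \sum_(y in X) n)%N.
  by rewrite -big_split /=; apply: eq_bigr => y yX; rewrite subnK // geX.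
move: H1; rewrite sumX sum_nat_const -{1}[(#|X| * n)%N]add0n => /eqP.
rewrite eqn_add2r eq_sym sum_nat_eq0 => /forallP/(_ x).
rewrite xX /= subn_eq0 => Hle; apply/eqP; rewrite eqn_leq Hle ge //.
by exists i0.
Qed.
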